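(* Let $\tilde R<0$ and let $\mathcal G=(\bar Q,\mu,\eta)$ be an intervention rule whose intervention set $\mathcal I$ is partial. Let $\pi$ be a policy that is $\varepsilon$-suboptimal for the absorbing MDP $\tilde{\mathcal M}$, and let $\pi'=\mathcal G(\pi)$. Then for any policy $\pi^*$, $$V^{\pi^*}(d_0)-V^\pi(d_0)\le\Big(|\tilde R|+\frac1{1-\gamma}\Big)P_{\mathcal G}(\pi^* )+\varepsilon,\qquad \bar V^\pi(d_0)\le\bar V^{\pi'}(d_0)+\frac{\varepsilon}{|\tilde R|}.$$
   Context: $\mathcal M=(\mathcal S,\mathcal A,P,r,\gamma)$ is a discounted MDP with discrete state and action spaces, reward $r(s,a)\in[0,1]$, discount $\gamma\in[0,1)$, initial distribution $d_0$. $\mathcal S$ contains two distinguished states $s_\triangleright,s_\circ$; $\mathcal S_{\mathrm{unsafe}}=\{s_\triangleright,s_\circ\}$, $\mathcal S_{\mathrm{safe}}=\mathcal S\setminus\mathcal S_{\mathrm{unsafe}}$; from $s_\triangleright$ every action leads to $s_\circ$ w.p. 1, $s_\circ$ is absorbing, $r=0$ on $\mathcal S_{\mathrm{unsafe}}$, $d_0(s_\circ)=0$. Cost $c(s,a)=\mathbb 1\{s=s_\triangleright\}$. For a stationary policy $\pi$ with trajectory law $\rho^\pi$ in $\mathcal M$ ($s_0\sim d_0$): $V^\pi(d_0)=\mathbb E_{\rho^\pi}[\sum_t\gamma^tr(s_t,a_t)]$, $\bar V^\pi(d_0)=\mathbb E_{\rho^\pi}[\sum_t\gamma^tc(s_t,a_t)]$.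 Intervention rule: $\mathcal G=(\bar Q,\mu,\eta)$ with backup policy $\mu$, $\eta\in[0,1]$, $\bar Q:\mathcal S_{\mathrm{safe}}\times\mathcal A\to[0,1]$; intervention set $\mathcal I=\{(s,a)\in\mathcal S_{\mathrm{safe}}\times\mathcal A:\bar Q(s,a)-\mathbb E_{a'\sim\mu(\cdot|s)}\bar Q(s,a')>\eta\}$; shielded policy $\mathcal G(\pi)(a|s)=\pi(a|s)\mathbb 1\{(s,a)\notin\mathcal I\}+w(s)\mu(a|s)$, $w(s)=\sum_{\tilde a:(s,\tilde a)\in\mathcal I}\pi(\tilde a|s)$. A set $\mathcal X\subseteq\mathcal S_{\mathrm{safe}}\times\mathcal A$ is partial if for every $(s,a)\in\mathcal X$ there is $a'$ with $(s,a')\notin\mathcal X$. Absorbing MDP: $\tilde{\mathcal M}=(\mathcal S\cup\{s_\dagger\},\mathcal A,\tilde P,\tilde r,\gamma)$: $\tilde r(s,a)=\tilde R$ if $(s,a)\in\mathcal I$, $\tilde r(s_\dagger,a)=0$, $\tilde r=r$ otherwise; $\tilde P(\cdot|s,a)$ is the point mass at $s_\dagger$ if $(s,a)\in\mathcal I$ or $s=s_\dagger$, else $P(\cdot|s,a)$. Policies are extended to $s_\dagger$ arbitrarily; $\tilde V^\pi(d_0)$ is the value in $\tilde{\mathcal M}$; $\tilde V^*(d_0)=\sup_\pi\tilde V^\pi(d_0)$; $\pi$ is $\varepsilon$-suboptimal if $\tilde V^*(d_0)-\tilde V^\pi(d_0)\le\varepsilon$. $P_{\mathcal G}(\pi)=(1-\gamma)\sum_{h\ge0}\gamma^h\Pr_{\rho^\pi}(\exists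 t\le h:(s_t,a_t)\in\mathcal I)$. *)

(* Defs.v *)
From HB Require Import structures.
From mathcomp Require Import all_boot all_order all_algebra.
From mathcomp Require Import all_classical all_reals.
From mathcomp Require Import ereal topology normedtype sequences esum.

Set Implicit Arguments.
Unset Strict Implicit.
Unset Printing Implicit Defensive.

Import Order.TTheory GRing.Theory Num.Theory.
Local Open Scope classical_set_scope.
Local Open Scope ring_scope.

Section MDP.
Variables (R : realType) (X A : countType).

Definition isDist (p : X -> R) : Prop :=
  (forall x, 0 <= p x) /\ (\esum_(x in [set: X]) (p x)%:E = 1)%E.

Definition isPolicy (pi : X -> A -> R) : Prop :=
  forall s, (forall a, 0 <= pi s a) /\ (\esum_(a in [set: A]) (pi s a)%:E = 1)%E.

Definition isKernel (P : X -> A -> X -> R) : Prop :=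
  forall s a, isDist (P s a).

Variables (d0 : X -> R) (P : X -> A -> X -> R) (pi : X -> A -> R).

(* probability, under the trajectory law rho^pi, that the trajectory prefix
   (s_0,a_0),...,(s_t,a_t) equals the given list of length t+1 *)
Fixpoint tailprob (x : X * A) (q : seq (X * A)) : R :=
  match q with
  | [::] => 1
  | y :: q' => P x.1 x.2 y.1 * pi y.1 y.2 * tailprob y q'
  end.

Definition pathprob (p : seq (X * A)) : R :=
  match p with
  | [::] => 0
  | x :: q => d0 x.1 * pi x.1 x.2 * tailprob x q
  end.

Definition prefixes (t : nat) : set (seq (X * A)) :=
  [set p | size p = t.+1].

Definition lastval (f : X -> A -> R) (p : seq (X * A)) : R :=
  match rev p with
  | [::] => 0
  | x :: _ => f x.1 x.2
  end.

Definition stepexp (f : X -> A -> R) (t : nat) : \bar R :=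
  (\esum_(p in prefixes t) (pathprob p * lastval f p)%:E)%E.

(* E_{rho^pi}[ sum_t gamma^t f(s_t,a_t) ] for a nonnegative f (Tonelli) *)
Definition nnvalue (gamma : R) (f : X -> A -> R) : \bar R :=
  (\sum_(t <oo) ((gamma ^+ t)%:E * stepexp f t))%E.

Definition value (gamma : R) (f : X -> A -> R) : R :=
  fine (nnvalue gamma (fun s a => Num.max 0 (f s a)))
  - fine (nnvalue gamma (fun s a => Num.max 0 (- f s a))).

Definition probhit (I : X -> A -> Prop) (h : nat) : \bar R :=
  (\esum_(p in [set p | size p = h.+1 /\ exists2 x, x \in p & I x.1 x.2])
     (pathprob p)%:E)%E.

End MDP.

Section Shield.
Variables (R : realType) (S A : countType).

(* intervention set of the rule G = (Qbar, mu, eta); safe = not in S_unsafe *)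
Definition intervene (safe : S -> Prop) (Qbar : S -> A -> R) (mu : S -> A -> R)
  (eta : R) (s : S) (a : A) : Prop :=
  safe s /\
  Qbar s a - fine (\esum_(a' in [set: A]) (mu s a' * Qbar s a')%:E)%E > eta.

Definition partialset (safe : S -> Prop) (I : S -> A -> Prop) : Prop :=
  forall s a, safe s -> I s a -> exists a', ~ I s a'.

Definition shield (I : S -> A -> Prop) (mu pi : S -> A -> R) (s : S) (a : A) : R :=
  (if `[< I s a >] then 0 else pi s a)
  + fine (\esum_(a' in [set a' | I s a']) (pi s a')%:E)%E * mu s a.

Definition PG (d0 : S -> R) (P : S -> A -> S -> R) (gamma : R)
  (I : S -> A -> Prop) (pi : S -> A -> R) : R :=
  (1 - gamma) * fine (\sum_(h <oo) ((gamma ^+ h)%:E * probhit d0 P pi I h))%E.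

(* absorbing MDP: state space option S, None = s_dagger *)
Definition abs_d0 (d0 : S -> R) (o : option S) : R :=
  match o with Some s => d0 s | None => 0 end.

Definition abs_P (P : S -> A -> S -> R) (I : S -> A -> Prop)
  (o : option S) (a : A) (o' : option S) : R :=
  match o with
  | None => if o' is None then 1 else 0
  | Some s => if `[< I s a >] then (if o' is None then 1 else 0)
              else match o' with Some s' => P s a s' | None => 0 end
  end.

Definition abs_r (r : S -> A -> R) (I : S -> A -> Prop) (Rt : R)
  (o : option S) (a : A) : R :=
  match o with
  | None => 0
  | Some s => if `[< I s a >] then Rt else r s a
  end.

Definition restrictS (pi : option S -> A -> R) (s : S) (a : A) : R := pi (Some s) a.

End Shield.

(* Main.v *)
Require Import Defs.
From HB Require Import structures.
From mathcomp Require Import all_boot all_order all_algebra.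
From mathcomp Require Import all_classical all_reals.
From mathcomp Require Import ereal topology normedtype sequences esum.
From mathcomp Require Import ring lra.
Import Order.TTheory GRing.Theory Num.Theory.
Import numFieldNormedType.Exports.
Local Open Scope classical_set_scope.
Local Open Scope ring_scope.
Set Implicit Arguments.
Unset Strict Implicit.
Section EsumZ.
Variables (R : realType) (T : choiceType).
Local Open Scope ereal_scope.

Lemma esumZl (I : set T) (c : R) (f : T -> \bar R) :
  (0 <= c)%R -> (forall i, 0 <= f i) ->
  \esum_(i in I) (c%:E * f i) = c%:E * \esum_(i in I) f i.
Proof.
move=> c0 f0; rewrite /esum -ereal_supZl//; last first.
  apply/set0P; exists 0; exists set0; first exact: fsets_set0.
  by rewrite fsbig_set0.
congr ereal_sup; apply/seteqP; split => x /=.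
  by move=> [F FI <-]; exists (\sum_(i \in F) f i); [exists F|rewrite ge0_mule_fsumr].
by move=> [y [F FI <-] <-]; exists F => //; rewrite ge0_mule_fsumr.
Qed.
End EsumZ.
Section Paths.
Variables (R : realType) (X A : countType).
Variables (d0 : X -> R) (P : X -> A -> X -> R) (pol : X -> A -> R).
Hypothesis d00 : forall x, 0 <= d0 x.
Hypothesis P0 : forall s a s', 0 <= P s a s'.
Hypothesis pol0 : forall s a, 0 <= pol s a.

Lemma tailprob_ge0 x q : 0 <= tailprob P pol x q.
Proof.
elim: q x => [|y q IH] x /=; first by [].
by rewrite !mulr_ge0.
Qed.

Lemma pathprob_ge0 p : 0 <= pathprob d0 P pol p.
Proof. by case: p => [|x q] //=; rewrite !mulr_ge0 // tailprob_ge0. Qed.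

Lemma tailprob_rcons x q y : tailprob P pol x (rcons q y) =
  tailprob P pol x q * (P (last x q).1 (last x q).2 y.1 * pol y.1 y.2).
Proof.
elim: q x => [|z q IH] x /=; first by rewrite mulr1 mul1r.
by rewrite IH !mulrA.
Qed.

Lemma pathprob_rcons x q y : pathprob d0 P pol (rcons (x :: q) y) =
  pathprob d0 P pol (x :: q) * (P (last x q).1 (last x q).2 y.1 * pol y.1 y.2).
Proof. by rewrite rcons_cons /= tailprob_rcons !mulrA. Qed.

Definition Ex (t : nat) (F : seq (X * A) -> R) : \bar R :=
  (\esum_(p in @prefixes X A t) (pathprob d0 P pol p * F p)%:E)%E.

Lemma Ex_ge0 t F : (forall p, 0 <= F p) -> (0 <= Ex t F)%E.
Proof. by move=> F0; apply: esum_ge0 => p _; rewrite lee_fin mulr_ge0 // pathprob_ge0. Qed.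

Lemma le_Ex t F G : (forall p, size p = t.+1 -> pathprob d0 P pol p * F p <= pathprob d0 P pol p * G p) ->
  (Ex t F <= Ex t G)%E.
Proof. by move=> FG; apply: le_esum => p /FG; rewrite lee_fin. Qed.

Lemma Ex_split t (F : seq (X * A) -> R) : (forall p, 0 <= F p) ->
  Ex t.+1 F = (\esum_(q in @prefixes X A t) \esum_(y in [set: X * A])
     (pathprob d0 P pol (rcons q y) * F (rcons q y))%:E)%E.
Proof.
move=> F0; rewrite esum_esum; last by move=> *; rewrite lee_fin mulr_ge0 // pathprob_ge0.
rewrite /Ex (reindex_esum (@prefixes X A t `*`` (fun=> [set: X * A])) _ (fun k => rcons k.1 k.2)) //.
split.
- by move=> [q y] /= [qt _]; rewrite /prefixes /= size_rcons qt.
- move=> [q1 y1] [q2 y2] /= _ _ /rcons_inj [-> ->]; done.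
- move=> p /=; rewrite /prefixes /=; case/lastP: p => [|q y] //=.
  rewrite size_rcons => -[qt]; by exists (q, y).
Qed.

End Paths.
Arguments Ex {R X A}.
Section Mass.
Variables (R : realType) (X A : countType).
Variables (d0 : X -> R) (P : X -> A -> X -> R) (pol : X -> A -> R).
Hypothesis d00 : forall x, 0 <= d0 x.
Hypothesis P0 : forall s a s', 0 <= P s a s'.
Hypothesis pol0 : forall s a, 0 <= pol s a.
Hypothesis Psum : forall s a, (\esum_(s' in [set: X]) (P s a s')%:E = 1)%E.
Hypothesis polsum : forall s, (\esum_(a in [set: A]) (pol s a)%:E = 1)%E.
Hypothesis d0sum : (\esum_(s in [set: X]) (d0 s)%:E = 1)%E.

Lemma pairsum (f : X -> A -> \bar R) : (forall s a, 0 <= f s a)%E ->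
  (\esum_(y in [set: X * A]) f y.1 y.2 = \esum_(s in [set: X]) \esum_(a in [set: A]) f s a)%E.
Proof.
move=> f0; rewrite esum_esum //; congr esum.
by apply/seteqP; split => -[x y] //=.
Qed.

Lemma step_sum s a : (\esum_(y in [set: X * A]) (P s a y.1 * pol y.1 y.2)%:E = 1)%E.
Proof.
rewrite (pairsum (f := fun s' a' => (P s a s' * pol s' a')%:E)); last by move=> *; rewrite lee_fin mulr_ge0.
under eq_esum do under eq_esum do rewrite EFinM.
rewrite -(Psum s a); apply: eq_esum => s' _.
by rewrite esumZl // ?polsum ?mule1 // => a'; rewrite lee_fin.
Qed.

Lemma Ex_marg t F : (forall p, 0 <= F p) ->
  Ex d0 P pol t.+1 (fun p => F (take t.+1 p)) = Ex d0 P pol t F.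
Proof.
move=> F0; rewrite (Ex_split d00 P0 pol0); last by move=> p; exact: F0.
apply: eq_esum => q; rewrite /prefixes /=; case: q => [|x q] // [qt].
transitivity (\esum_(y in [set: X * A]) ((pathprob d0 P pol (x :: q) * F (x :: q))%:E *
   (P (last x q).1 (last x q).2 y.1 * pol y.1 y.2)%:E))%E.
  apply: eq_esum => y _; rewrite pathprob_rcons.
  have -> : take t.+1 (rcons (x :: q) y) = x :: q by rewrite -cats1 takel_cat /= ?qt // -qt take_size.
  by rewrite -EFinM; congr EFin; rewrite mulrAC.
rewrite esumZl ?step_sum ?mule1 //; first by rewrite mulr_ge0 // (pathprob_ge0 d00 P0 pol0).

by move=> y; rewrite lee_fin mulr_ge0.
Qed.

Lemma Ex_mass t : Ex d0 P pol t (fun _ => 1) = 1%E.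
Proof.
elim: t => [|t IH].
  rewrite /Ex (reindex_esum [set: X * A] _ (fun y => [:: y])); last first.
    split.
    - by move=> y.
    - by move=> y1 y2 _ _ [].
    - by move=> [|y [|]] //= _; exists y.
  rewrite (pairsum (f := fun s a => (pathprob d0 P pol [:: (s, a)] * 1)%:E)); last first.
    by move=> *; rewrite lee_fin mulr1 pathprob_ge0.
  under eq_esum do under eq_esum do rewrite /= !mulr1 EFinM.
  rewrite -d0sum; apply: eq_esum => s' _.
  by rewrite esumZl // ?polsum ?mule1 // => a'; rewrite lee_fin.
by rewrite -IH -(Ex_marg t (F := fun _ => 1)).
Qed.

End Mass.
Section Series.
Variables (R : realType) (g : R).
Hypothesis g0 : 0 <= g.
Hypothesis g1 : g < 1.

Definition rsum (u : nat -> R) : R := fine (\sum_(t <oo) (u t)%:E)%E.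

Lemma psum_geo N : \sum_(0 <= t < N) g ^+ t <= (1 - g)^-1.
Proof.
have h1 : 0 < 1 - g by rewrite subr_gt0.
rewrite -(ler_pM2l h1) mulfV ?gt_eqF //.
have -> : (1 - g) * \sum_(0 <= t < N) g ^+ t = 1 - g ^+ N.
  elim: N => [|N IH]; first by rewrite big_geq // mulr0 expr0 subrr.
  by rewrite big_nat_recr //= mulrDr IH exprS; ring.
by rewrite lerBlDr lerDl exprn_ge0.
Qed.

Lemma esum_bnd (u : nat -> R) (K : R) : (forall t, 0 <= u t <= K * g ^+ t) ->
  (\sum_(t <oo) (u t)%:E <= (K * (1 - g)^-1)%:E)%E.
Proof.
move=> uK; apply: lime_le.
  by apply: is_cvg_nneseries => n _ _; rewrite lee_fin; case/andP: (uK n).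
apply: nearW => N; rewrite sumEFin lee_fin.
have K0 : 0 <= K.
  case/andP: (uK 0%N) => a b; move: (le_trans a b); rewrite expr0 mulr1 //.
apply: (le_trans (y := \sum_(0 <= t < N) K * g ^+ t)).
  by apply: ler_sum => t _; case/andP: (uK t).
by rewrite -mulr_sumr ler_wpM2l // psum_geo.
Qed.

Lemma rsumE (u : nat -> R) (K : R) : (forall t, 0 <= u t <= K * g ^+ t) ->
  (\sum_(t <oo) (u t)%:E)%E = (rsum u)%:E.
Proof.
move=> uK; rewrite /rsum fineK //; rewrite ge0_fin_numE.
  by apply: (le_lt_trans (esum_bnd uK)); rewrite ltry.
by apply: nneseries_ge0 => n _ _; rewrite lee_fin; case/andP: (uK n).
Qed.

Lemma rsum_ge_psum (u : nat -> R) (K : R) N : (forall t, 0 <= u t <= K * g ^+ t) ->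
  \sum_(0 <= t < N) u t <= rsum u.
Proof.
move=> uK; rewrite -lee_fin -(rsumE uK) -sumEFin.
by apply: nneseries_lim_ge => n _ _; rewrite lee_fin; case/andP: (uK n).
Qed.

Lemma rsum_ge0 (u : nat -> R) (K : R) : (forall t, 0 <= u t <= K * g ^+ t) -> 0 <= rsum u.
Proof.
move=> uK; rewrite -lee_fin -(rsumE uK).
by apply: nneseries_ge0 => n _ _; rewrite lee_fin; case/andP: (uK n).
Qed.

Lemma rsum_le (u : nat -> R) (K c K' : R) : (forall t, 0 <= u t <= K * g ^+ t) -> 0 <= K' ->
  (forall N, \sum_(0 <= t < N) u t <= c + K' * g ^+ N) -> rsum u <= c.
Proof.
move=> uK K'0 hN; apply/ler_addgt0Pr => e e0.
rewrite -lee_fin -(rsumE uK); apply: lime_le.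
  by apply: is_cvg_nneseries => n _ _; rewrite lee_fin; case/andP: (uK n).
have gK : geometric K' g @ \oo --> 0 by apply: cvg_geometric; rewrite ger0_norm.
near=> N; rewrite sumEFin lee_fin.
apply: (le_trans (hN N)); rewrite lerD2l; apply: ltW.
have hK : `|geometric K' g N| < e.
  by near: N; exact: (cvgr0_norm_lt (geometric K' g) gK e e0).
by apply: le_lt_trans hK; rewrite /= ler_norm.
Unshelve. all: by end_near.
Qed.

Lemma rsumD (u v : nat -> R) (Ku Kv : R) : (forall t, 0 <= u t <= Ku * g ^+ t) ->
  (forall t, 0 <= v t <= Kv * g ^+ t) ->
  rsum (fun t => u t + v t) = rsum u + rsum v.
Proof.
move=> uK vK.
have uvK : forall t, 0 <= u t + v t <= (Ku + Kv) * g ^+ t.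
  move=> t; case/andP: (uK t) => a b; case/andP: (vK t) => c d.
  by rewrite addr_ge0 //= mulrDl lerD.
apply: EFin_inj; rewrite -(rsumE uvK) EFinD -(rsumE uK) -(rsumE vK).
under eq_eseriesr do rewrite EFinD.
by apply: nneseriesD => i _ _; rewrite lee_fin; [case/andP: (uK i)|case/andP: (vK i)].
Qed.

Lemma rsumZ (u : nat -> R) (K c : R) : 0 <= c -> (forall t, 0 <= u t <= K * g ^+ t) ->
  rsum (fun t => c * u t) = c * rsum u.
Proof.
move=> c0 uK.
have cuK : forall t, 0 <= c * u t <= (c * K) * g ^+ t.
  move=> t; case/andP: (uK t) => a b.
  by rewrite mulr_ge0 //= -mulrA ler_wpM2l.
apply: EFin_inj; rewrite -(rsumE cuK) EFinM -(rsumE uK).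
under eq_eseriesr do rewrite EFinM.
by apply: nneseriesZl => i _; rewrite lee_fin; case/andP: (uK i).
Qed.

Lemma rsum_le_pt (u v : nat -> R) (Kv : R) : (forall t, 0 <= u t) ->
  (forall t, 0 <= v t <= Kv * g ^+ t) -> (forall t, u t <= v t) ->
  rsum u <= rsum v.
Proof.
move=> u0 vK uv.
have uK : forall t, 0 <= u t <= Kv * g ^+ t.
  by move=> t; rewrite u0 /=; apply: le_trans (uv t) _; case/andP: (vK t).
apply: (rsum_le uK (K' := 0)) => // N; rewrite mul0r addr0.
apply: le_trans (rsum_ge_psum N vK).
by apply: ler_sum => t _.
Qed.

End Series.
Section ExReal.
Variables (R : realType) (X A : countType).
Variables (d0 : X -> R) (P : X -> A -> X -> R) (pol : X -> A -> R).
Hypothesis d00 : forall x, 0 <= d0 x.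
Hypothesis P0 : forall s a s', 0 <= P s a s'.
Hypothesis pol0 : forall s a, 0 <= pol s a.
Hypothesis Psum : forall s a, (\esum_(s' in [set: X]) (P s a s')%:E = 1)%E.
Hypothesis polsum : forall s, (\esum_(a in [set: A]) (pol s a)%:E = 1)%E.
Hypothesis d0sum : (\esum_(s in [set: X]) (d0 s)%:E = 1)%E.

Local Notation pr := (pathprob d0 P pol).
Local Notation E := (Ex d0 P pol).

Definition ex t F := fine (E t F).

Lemma Ex_bnd t F (K : R) : (forall p, 0 <= F p <= K) -> (E t F <= K%:E)%E.
Proof.
move=> FK.
have K0 : 0 <= K by case/andP: (FK [::]) => a b; apply: le_trans b.
apply: (le_trans (y := E t (fun _ => K))).
  by apply: le_Ex => p _; rewrite ler_wpM2l ?pathprob_ge0 //; case/andP: (FK p).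
rewrite /Ex.
under eq_esum do rewrite mulrC -(mulr1 (pr _)) EFinM.
rewrite esumZl //; last by move=> p; rewrite lee_fin mulr1 pathprob_ge0.
by have := Ex_mass d00 P0 pol0 Psum polsum d0sum t; rewrite /Ex => ->; rewrite mule1.
Qed.

Lemma ExE t F (K : R) : (forall p, 0 <= F p <= K) -> E t F = (ex t F)%:E.
Proof.
move=> FK; rewrite /ex fineK // ge0_fin_numE.
  by apply: le_lt_trans (Ex_bnd t FK) _; rewrite ltry.
by apply: Ex_ge0 => // p; case/andP: (FK p).
Qed.

Lemma ex_bnd t F (K : R) : (forall p, 0 <= F p <= K) -> 0 <= ex t F <= K.
Proof.
move=> FK; rewrite -!lee_fin -(ExE t FK) Ex_bnd // andbT.
by apply: Ex_ge0 => // p; case/andP: (FK p).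
Qed.

Lemma ex_le t F G (K K' : R) : (forall p, 0 <= F p <= K) -> (forall p, 0 <= G p <= K') ->
  (forall p, size p = t.+1 -> pr p * F p <= pr p * G p) -> ex t F <= ex t G.
Proof.
by move=> FK GK FG; rewrite -lee_fin -(ExE t FK) -(ExE t GK); apply: le_Ex.
Qed.

Lemma exD t F G (K K' : R) : (forall p, 0 <= F p <= K) -> (forall p, 0 <= G p <= K') ->
  ex t (fun p => F p + G p) = ex t F + ex t G.
Proof.
move=> FK GK.
have FGK : forall p, 0 <= F p + G p <= K + K'.
  by move=> p; case/andP: (FK p) => a b; case/andP: (GK p) => c d; rewrite addr_ge0 //= lerD.
apply: EFin_inj; rewrite EFinD -(ExE t FK) -(ExE t GK) -(ExE t FGK) /Ex -esumD.
- by apply: eq_esum => p _; rewrite mulrDr EFinD.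
- by move=> p _; rewrite lee_fin mulr_ge0 ?pathprob_ge0 //; case/andP: (FK p).
- by move=> p _; rewrite lee_fin mulr_ge0 ?pathprob_ge0 //; case/andP: (GK p).
Qed.

Lemma exZ t F (K c : R) : 0 <= c -> (forall p, 0 <= F p <= K) ->
  ex t (fun p => c * F p) = c * ex t F.
Proof.
move=> c0 FK.
have cFK : forall p, 0 <= c * F p <= c * K.
  by move=> p; case/andP: (FK p) => a b; rewrite mulr_ge0 //= ler_wpM2l.
apply: EFin_inj; rewrite EFinM -(ExE t FK) -(ExE t cFK) /Ex -esumZl //.
- by apply: eq_esum => p _; rewrite -EFinM; congr EFin; rewrite mulrCA.
- by move=> p; rewrite lee_fin mulr_ge0 ?pathprob_ge0 //; case/andP: (FK p).
Qed.

Lemma ex_marg t F (K : R) : (forall p, 0 <= F p <= K) ->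
  ex t.+1 (fun p => F (take t.+1 p)) = ex t F.
Proof.
move=> FK; rewrite /ex Ex_marg //; by move=> p; case/andP: (FK p).
Qed.

End ExReal.
Section Values.
Variables (R : realType) (X A : countType).
Variables (d0 : X -> R) (P : X -> A -> X -> R) (pol : X -> A -> R).
Hypothesis d00 : forall x, 0 <= d0 x.
Hypothesis P0 : forall s a s', 0 <= P s a s'.
Hypothesis pol0 : forall s a, 0 <= pol s a.
Hypothesis Psum : forall s a, (\esum_(s' in [set: X]) (P s a s')%:E = 1)%E.
Hypothesis polsum : forall s, (\esum_(a in [set: A]) (pol s a)%:E = 1)%E.
Hypothesis d0sum : (\esum_(s in [set: X]) (d0 s)%:E = 1)%E.
Variable (g : R).
Hypothesis g0 : 0 <= g.
Hypothesis g1 : g < 1.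

Local Notation ex := (ex d0 P pol).

Lemma lastval_bnd (f : X -> A -> R) (K : R) : 0 <= K -> (forall s a, 0 <= f s a <= K) ->
  forall p, 0 <= lastval f p <= K.
Proof. by move=> K0 fK p; rewrite /lastval; case: (rev p) => [|x _] //=; rewrite lexx K0. Qed.

Lemma seq_bnd (F : seq (X * A) -> R) (K : R) : (forall p, 0 <= F p <= K) ->
  forall t, 0 <= g ^+ t * ex t F <= K * g ^+ t.
Proof.
move=> FK t; have := ex_bnd d00 P0 pol0 Psum polsum d0sum t FK => /andP[a b].
by rewrite mulr_ge0 ?exprn_ge0 //= mulrC ler_wpM2r ?exprn_ge0.
Qed.

Lemma serE (F : seq (X * A) -> R) (K : R) : (forall p, 0 <= F p <= K) ->
  (\sum_(t <oo) ((g ^+ t)%:E * Ex d0 P pol t F))%E = (rsum (fun t => g ^+ t * ex t F))%:E.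
Proof.
move=> FK; rewrite -(rsumE g0 g1 (seq_bnd FK)).
apply: congr_lim; apply/funext => n; apply: eq_bigr => t _.
by rewrite EFinM (ExE d00 P0 pol0 Psum polsum d0sum t FK).
Qed.

Lemma nnvalueE (f : X -> A -> R) (K : R) : 0 <= K -> (forall s a, 0 <= f s a <= K) ->
  nnvalue d0 P pol g f = (rsum (fun t => g ^+ t * ex t (lastval f)))%:E.
Proof.
move=> K0 fK; have LK := lastval_bnd K0 fK.
rewrite -(rsumE g0 g1 (seq_bnd LK)) /nnvalue.
apply: congr_lim; apply/funext => n; apply: eq_bigr => t _.
by rewrite EFinM; congr (_ * _)%E; rewrite /stepexp -/(Ex d0 P pol t (lastval f)) (ExE d00 P0 pol0 Psum polsum d0sum t LK).
Qed.

Lemma valueE (f : X -> A -> R) (K : R) : 0 <= K -> (forall s a, `|f s a| <= K) ->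
  value d0 P pol g f = rsum (fun t => g ^+ t * ex t (lastval (fun s a => Num.max 0 (f s a))))
    - rsum (fun t => g ^+ t * ex t (lastval (fun s a => Num.max 0 (- f s a)))).
Proof.
move=> K0 fK; rewrite /value (nnvalueE (K := K)) // ?(nnvalueE (f := fun s a => Num.max 0 (- f s a)) (K := K)) //.
- move=> s a; rewrite le_max lexx /= ge_max K0 /=.
  by apply: le_trans (fK s a); rewrite -normrN ler_norm.
- move=> s a; rewrite le_max lexx /= ge_max K0 /=.
  by apply: le_trans (fK s a); rewrite ler_norm.
Qed.

End Values.
Section Transfer.
Variables (R : realType) (S A : countType).
Variables (d0 : S -> R) (P : S -> A -> S -> R) (I : S -> A -> Prop) (rho : option S -> A -> R).
Hypothesis d00 : forall x, 0 <= d0 x.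
Hypothesis P0 : forall s a s', 0 <= P s a s'.
Hypothesis rho0 : forall s a, 0 <= rho s a.

Definition Ib (x : S * A) : bool := `[< I x.1 x.2 >].
Definition avoid (p : seq (S * A)) : bool := all (fun x => ~~ Ib x) p.
Definition pre (p : seq (S * A)) : seq (S * A) :=
  match p with [::] => [::] | x :: q => belast x q end.
Definition lift (p : seq (S * A)) : seq (option S * A) := map (fun x => (Some x.1, x.2)) p.

Local Notation tP := (abs_P P I).
Local Notation td0 := (abs_d0 d0).

Lemma tail_lift x q : tailprob tP rho (Some x.1, x.2) (lift q) =
  tailprob P (restrictS rho) x q * (avoid (belast x q))%:R.
Proof.
elim: q x => [|y q IH] x /=; first by rewrite mulr1.
rewrite IH /restrictS /Ib /=; case: (asboolP (I x.1 x.2)) => hx /=.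
  by rewrite !mul0r mulr0.
by rewrite !mulrA.
Qed.

Lemma path_lift p : pathprob td0 tP rho (lift p) =
  pathprob d0 P (restrictS rho) p * (avoid (pre p))%:R.
Proof.
case: p => [|x q] /=; first by rewrite mul0r.
by rewrite -[(Some x.1, x.2)]/((Some x.1, x.2)) tail_lift /restrictS !mulrA.
Qed.

Lemma lastval_lift (f : option S -> A -> R) p :
  lastval f (lift p) = lastval (fun s a => f (Some s) a) p.
Proof. by rewrite /lastval /lift -map_rev; case: (rev p). Qed.

Lemma lift_surj (q : seq (option S * A)) : ~~ has (fun y => y.1 == None) q ->
  exists p, q = lift p.
Proof.
elim: q => [|[[s|] a] q IH] //=; first by exists [::].
by move=> /IH [p ->]; exists ((s, a) :: p).
Qed.

Lemma tailN (x : option S * A) q : x.1 = None -> (last x q).1 <> None ->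
  tailprob tP rho x q = 0.
Proof.
elim: q x => [|y q IH] x /= hx hl; first by [].
case: x hx hl => [[s|] a] //= _ hl.
by case: y hl => [[s'|] a'] /= hl; [rewrite !mul0r | rewrite IH // mulr0].
Qed.

Lemma tail_hasN x q : has (fun y => y.1 == None) q -> (last x q).1 <> None ->
  tailprob tP rho x q = 0.
Proof.
elim: q x => [|y q IH] x //= /orP[/eqP hy|hq] hl.
  by rewrite tailN // mulr0.
by rewrite IH // mulr0.
Qed.

Lemma path_hasN (f : option S -> A -> R) q : (forall a, f None a = 0) ->
  has (fun y => y.1 == None) q -> pathprob td0 tP rho q * lastval f q = 0.
Proof.
move=> fN; case: q => [|x q] //.
have hlast : lastval f (x :: q) = f (last x q).1 (last x q).2.
  by rewrite /lastval lastI rev_rcons.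
rewrite hlast; case E: (last x q).1 => [s|]; last by rewrite fN mulr0.
move=> /orP[/eqP hx|hq].
  by rewrite /= /abs_d0 hx !mul0r.
by rewrite /= tail_hasN ?E // !mulr0 mul0r.
Qed.

Lemma Ex_transfer t (f : option S -> A -> R) : (forall a, f None a = 0) ->
  (forall o a, 0 <= f o a) ->
  Ex td0 tP rho t (lastval f) =
  Ex d0 P (restrictS rho) t (fun p => (avoid (pre p))%:R * lastval (fun s a => f (Some s) a) p).
Proof.
move=> fN f0.
have pos : forall q, 0 <= pathprob td0 tP rho q * lastval f q.
  move=> q; rewrite mulr_ge0 //.
    apply: pathprob_ge0 => //; first by case.
    by move=> [s|] a [s'|] /=; rewrite ?lexx ?ler01 //; case: ifP.
  by rewrite /lastval; case: (rev q).
rewrite /Ex (esumID (range lift)); last by move=> q _; rewrite lee_fin pos.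
rewrite [X in (_ + X)%E]esum1 ?adde0; last first.
  move=> q [_ /= hq]; rewrite path_hasN //.
  apply: contra_notT hq => /lift_surj [p ->]; by exists p.
have -> : @prefixes (option S) A t `&` range lift = lift @` (@prefixes S A t).
  apply/seteqP; split.
  - move=> q [qt [p _ hp]]; exists p => //; rewrite /prefixes /= -qt -hp size_map //.
  - move=> q [p pt <-]; split; last by exists p.
    by rewrite /prefixes /= size_map.
rewrite esum_image; last by move=> p1 p2 _ _; apply: inj_map => -[s a] [s' a'] /= [-> ->].
apply: eq_esum => p _; rewrite path_lift lastval_lift; congr EFin; ring.
Qed.

End Transfer.
Section PolicyLemmas.
Variable (R : realType).

Lemma move_mass (A : countType) (v k : A -> R) (J : A -> Prop) :
  (forall a, 0 <= v a) -> (\esum_(a in [set: A]) (v a)%:E = 1)%E ->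
  (forall a, 0 <= k a) -> (\esum_(a in [set: A]) (k a)%:E = 1)%E ->
  (forall a, 0 <= (if `[< J a >] then 0 else v a) +
      fine (\esum_(a' in [set a' | J a']) (v a')%:E)%E * k a) /\
  (\esum_(a in [set: A]) ((if `[< J a >] then 0 else v a) +
      fine (\esum_(a' in [set a' | J a']) (v a')%:E)%E * k a)%:E = 1)%E.
Proof.
move=> v0 vs k0 ks.
set w := (\esum_(a' in [set a' | J a']) (v a')%:E)%E.
have hsplit : (\esum_(a in [set: A]) (v a)%:E =
    w + \esum_(a in ~` [set a' | J a']) (v a)%:E)%E.
  rewrite (esumID [set a' | J a']); last by move=> a _; rewrite lee_fin.
  by rewrite !setTI.
have w0 : (0 <= w)%E by apply: esum_ge0 => a _; rewrite lee_fin.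
have c0 : (0 <= \esum_(a in ~` [set a' | J a']) (v a)%:E)%E.
  by apply: esum_ge0 => a _; rewrite lee_fin.
have wfin : w \is a fin_num.
  rewrite ge0_fin_numE //; apply: (le_lt_trans (y := 1%E)); last by rewrite ltry.
  by rewrite -vs hsplit leeDl.
have fw0 : 0 <= fine w by rewrite fine_ge0.
split.
  move=> a; rewrite addr_ge0 ?mulr_ge0 //; by case: ifP.
rewrite -vs hsplit.
under eq_esum do rewrite EFinD.
rewrite esumD; first last.
- by move=> a _; rewrite lee_fin mulr_ge0.
- by move=> a _; rewrite lee_fin; case: ifP.
rewrite addeC; congr (_ + _)%E.
  under eq_esum do rewrite EFinM.
  by rewrite esumZl // ?ks ?mule1 ?fineK // => a; rewrite lee_fin.
rewrite [RHS]esum_mkcond; apply: eq_esum => a _.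
case: (asboolP (J a)) => ha.
  by rewrite ifF //; apply/negbTE; rewrite in_setC negbK; apply/mem_set.
by rewrite ifT //; rewrite in_setC; apply/negP => /set_mem.
Qed.

Lemma tail_mono (X A : countType) (P : X -> A -> X -> R) (s1 s2 : X -> A -> R) x q :
  (forall s a s', 0 <= P s a s') -> (forall s a, 0 <= s1 s a) ->
  (forall y, y \in q -> s1 y.1 y.2 <= s2 y.1 y.2) ->
  tailprob P s1 x q <= tailprob P s2 x q.
Proof.
move=> P0 s10; elim: q x => [|y q IH] x //= hq.
have hy : s1 y.1 y.2 <= s2 y.1 y.2 by apply: hq; rewrite inE eqxx.
rewrite -!mulrA; apply: ler_wpM2l => //.
apply: ler_pM => //; first by rewrite tailprob_ge0.
by apply: IH => z hz; apply: hq; rewrite inE hz orbT.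
Qed.

Lemma path_mono (X A : countType) (d0 : X -> R) (P : X -> A -> X -> R) (s1 s2 : X -> A -> R) p :
  (forall x, 0 <= d0 x) -> (forall s a s', 0 <= P s a s') -> (forall s a, 0 <= s1 s a) ->
  (forall y, y \in p -> s1 y.1 y.2 <= s2 y.1 y.2) ->
  pathprob d0 P s1 p <= pathprob d0 P s2 p.
Proof.
move=> d00 P0 s10; case: p => [|x q] //= hp.
have hx : s1 x.1 x.2 <= s2 x.1 x.2 by apply: hp; rewrite inE eqxx.
apply: ler_pM; rewrite ?mulr_ge0 ?tailprob_ge0 //; first by apply: ler_wpM2l.
by apply: tail_mono => // z hz; apply: hp; rewrite inE hz orbT.
Qed.

Lemma path_zero (X A : countType) (d0 : X -> R) (P : X -> A -> X -> R) (s : X -> A -> R) q y :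
  s y.1 y.2 = 0 -> pathprob d0 P s (rcons q y) = 0.
Proof.
move=> sy; case: q => [|x q]; first by rewrite /= sy mulr0 mul0r.
by rewrite pathprob_rcons sy !mulr0.
Qed.

End PolicyLemmas.
Section Main.
Variables (R : realType) (S A : countType) (P : S -> A -> S -> R) (r : S -> A -> R)
  (g : R) (d0 : S -> R) (s_tri s_circ : S) (I : S -> A -> Prop) (Rt : R).
Hypothesis HP : isKernel P.
Hypothesis Hr : forall s a, 0 <= r s a <= 1.
Hypothesis g0 : 0 <= g.
Hypothesis g1 : g < 1.
Hypothesis Hd : isDist d0.
Hypothesis Htc : s_tri <> s_circ.
Hypothesis Ptri : forall a, P s_tri a s_circ = 1.
Hypothesis Pcirc : forall a, P s_circ a s_circ = 1.
Hypothesis Isafe : forall s a, I s a -> s <> s_tri /\ s <> s_circ.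
Hypothesis Rt0 : Rt < 0.

Let P0 : forall s a s', 0 <= P s a s'. Proof. by move=> s a s'; case: (HP s a) => h _; exact: h. Qed.
Let Psum : forall s a, (\esum_(s' in [set: S]) (P s a s')%:E = 1)%E.
Proof. by move=> s a; case: (HP s a). Qed.
Let d00 : forall s, 0 <= d0 s. Proof. by case: Hd. Qed.
Let d0sum : (\esum_(s in [set: S]) (d0 s)%:E = 1)%E. Proof. by case: Hd. Qed.

Definition nav (p : seq (S * A)) : R := (~~ avoid I p)%:R.
Definition ind (p : seq (S * A)) : R := (avoid I p)%:R.
Definition hitf (p : seq (S * A)) : R :=
  (avoid I (pre p))%:R * lastval (fun s a => (`[< I s a >] : bool)%:R) p.

Lemma b01 (b : bool) : 0 <= (b%:R : R) <= 1.
Proof. by case: b => /=; rewrite ?lexx ?ler01. Qed.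

Lemma nav_b p : 0 <= nav p <= 1. Proof. exact: b01. Qed.
Lemma ind_b p : 0 <= ind p <= 1. Proof. exact: b01. Qed.
Lemma lastval_b01 (f : S -> A -> R) p : (forall s a, 0 <= f s a <= 1) -> 0 <= lastval f p <= 1.
Proof. by move=> hf; apply: lastval_bnd => //; rewrite ler01. Qed.
Lemma mul_b (x y : R) : 0 <= x <= 1 -> 0 <= y <= 1 -> 0 <= x * y <= 1.
Proof.
move=> /andP[a b] /andP[c d]; rewrite mulr_ge0 //=.
by rewrite -(mulr1 1) ler_pM.
Qed.
Lemma hitf_b p : 0 <= hitf p <= 1.
Proof. by apply: mul_b; [exact: b01| apply: lastval_b01 => s a; exact: b01]. Qed.

Lemma pre_rcons (q : seq (S * A)) y : pre (rcons q y) = q.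
Proof. by case: q => [|x q] //=; rewrite belast_rcons. Qed.

Lemma lastval_rcons (f : S -> A -> R) (q : seq (S * A)) y : lastval f (rcons q y) = f y.1 y.2.
Proof. by rewrite /lastval rev_rcons. Qed.

Lemma avoid_rcons (q : seq (S * A)) y : avoid I (rcons q y) = avoid I q && ~~ Ib I y.
Proof. by rewrite /avoid all_rcons andbC. Qed.

Lemma take_rcons_sz (q : seq (S * A)) y n : size q = n -> take n (rcons q y) = q.
Proof. by move=> <-; rewrite -cats1 takel_cat // take_size. Qed.

Lemma esum_one (T : countType) (f : T -> R) x0 x : (forall y, 0 <= f y) ->
  (\esum_(y in [set: T]) (f y)%:E = 1)%E -> f x0 = 1 -> x <> x0 -> f x = 0.
Proof.
move=> f0 fs fx0 xx0; apply/eqP; rewrite eq_le f0 andbT.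
have e1 := esumID [set x0] [set: T] (fun y => (f y)%:E) (fun y _ => f0 y : (0 <= (f y)%:E)%E).
rewrite !setTI esum_set1 ?lee_fin // fx0 fs in e1.
have e2 := esumID [set x] (~` [set x0]) (fun y => (f y)%:E) (fun y _ => f0 y : (0 <= (f y)%:E)%E).
have E : ~` [set x0] `&` [set x] = [set x].
  by apply/seteqP; split => y /=; [case | move=> ->; split].
rewrite E esum_set1 ?lee_fin // in e2.
rewrite e2 in e1.
have r0 : (0 <= \esum_(i in ~` [set x0] `&` ~` [set x]) (f i)%:E)%E by apply: esum_ge0 => y _; rewrite lee_fin.
have h : ((1 + f x)%:E <= 1%:E)%E.
  by rewrite EFinD {2}e1 leeD2l // leeDl.
rewrite lee_fin in h; lra.
Qed.

Definition cf (s : S) (a : A) : R := if s == s_tri then 1 else 0.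
Definition sf (s : S) (a : A) : R := ((s != s_tri) && (s != s_circ))%:R.

Lemma Pzero s a s' : ~~ ((s != s_tri) && (s != s_circ)) -> s' != s_circ -> P s a s' = 0.
Proof.
move=> hs hs'; rewrite negb_and !negbK in hs.
apply: (esum_one (x0 := s_circ) _ (Psum s a)) => //; last exact/eqP.
by case/orP: hs => /eqP ->.
Qed.

Lemma boolineq (a i t cc zs : bool) : ~~ (t && cc) -> (i -> ~~ t && ~~ cc) -> zs || cc ->
  (~~ (a && ~~ i))%:R * (t%:R : R) + (~~ (a && ~~ i))%:R * (~~ t && ~~ cc)%:R <=
  a%:R * i%:R + (~~ a)%:R * zs%:R.
Proof.
by case: a; case: i; case: t; case: cc; case: zs => //= _ _ _;
  rewrite ?mul0r ?mul1r ?addr0 ?add0r ?lexx ?ler01.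
Qed.

Section Pol.
Variable (sg : S -> A -> R).
Hypothesis Hsg : isPolicy sg.
Let sg0 : forall s a, 0 <= sg s a. Proof. by move=> s a; case: (Hsg s) => h _; exact: h. Qed.
Let sgsum : forall s, (\esum_(a in [set: A]) (sg s a)%:E = 1)%E. Proof. by move=> s; case: (Hsg s). Qed.

Local Notation exs := (ex d0 P sg).

Lemma exs_b t F : (forall p, 0 <= F p <= 1) -> 0 <= exs t F <= 1.
Proof. by move=> FK; apply: (ex_bnd d00 P0 sg0 Psum sgsum d0sum). Qed.

Lemma seqs_b F : (forall p, 0 <= F p <= 1) -> forall t, 0 <= g ^+ t * exs t F <= 1 * g ^+ t.
Proof. by move=> FK; exact: (seq_bnd d00 P0 sg0 Psum sgsum d0sum g0 FK). Qed.

Lemma exs_le t F G (K K' : R) : (forall p, 0 <= F p <= K) -> (forall p, 0 <= G p <= K') ->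
  (forall p, size p = t.+1 -> F p <= G p) -> exs t F <= exs t G.
Proof.
move=> FK GK FG; apply: (ex_le d00 P0 sg0 Psum sgsum d0sum FK GK) => p hp.
by apply: ler_wpM2l; [apply: pathprob_ge0 | apply: FG].
Qed.

Lemma b_h_step t : exs t nav + exs t.+1 hitf <= exs t.+1 nav.
Proof.
rewrite -(ex_marg d00 P0 sg0 Psum sgsum t nav_b).
rewrite -(exD d00 P0 sg0 Psum sgsum d0sum _ (K := 1) (K' := 1)); first last.
- exact: hitf_b.
- by move=> p; exact: nav_b.
apply: (exs_le (K := 2) (K' := 1)).
- move=> p; apply/andP; split.
    have /andP[h1 _] := nav_b (take t.+1 p); have /andP[h2 _] := hitf_b p.
    by rewrite addr_ge0.
  have /andP[_ h1] := nav_b (take t.+1 p); have /andP[_ h2] := hitf_b p.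
  by apply: le_trans (lerD h1 h2) _; lra.
- exact: nav_b.
- case/lastP => [|q y] //; rewrite size_rcons => -[hq].
  rewrite take_rcons_sz // /nav /hitf pre_rcons lastval_rcons avoid_rcons /Ib.
  by case: (avoid I q); case: (asboolP (I y.1 y.2)) => /= _; lra.
Qed.

Lemma h0_b0 : exs 0 hitf <= exs 0 nav.
Proof.
apply: (exs_le hitf_b nav_b) => -[|y [|]] // _.
by rewrite /hitf /nav /lastval /= mul1r /avoid /= andbT negbK.
Qed.

Lemma SL1 : rsum (fun t => g ^+ t * exs t hitf) <= (1 - g) * rsum (fun t => g ^+ t * exs t nav).
Proof.
have claim : forall N, \sum_(0 <= t < N.+1) (g ^+ t * exs t hitf) <=
    (1 - g) * \sum_(0 <= t < N.+1) (g ^+ t * exs t nav) + g ^+ N.+1 * exs N nav.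
  elim => [|N IH].
    rewrite !big_nat1 expr0 !mul1r expr1.
    have -> : (1 - g) * exs 0 nav + g * exs 0 nav = exs 0 nav by ring.
    exact: h0_b0.
  rewrite big_nat_recr //= [X in _ <= (1 - g) * X + _]big_nat_recr //=.
  have st := b_h_step N.
  have a0 : 0 <= g ^+ N.+1 by rewrite exprn_ge0.
  have st' := ler_wpM2l a0 st.
  rewrite mulrDr in st'.
  have -> : (1 - g) * (\sum_(0 <= i < N.+1) (g ^+ i * exs i nav) + g ^+ N.+1 * exs N.+1 nav) +
      g ^+ N.+2 * exs N.+1 nav = (1 - g) * \sum_(0 <= i < N.+1) (g ^+ i * exs i nav) + g ^+ N.+1 * exs N.+1 nav.
    by rewrite [g ^+ N.+2]exprS; ring.
  move: IH st'; set x := \sum_(0 <= i < N.+1) _; set y := \sum_(0 <= i < N.+1) _.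
  set u := g ^+ N.+1 * exs N nav; set v := g ^+ N.+1 * exs N.+1 hitf; set w := g ^+ N.+1 * exs N.+1 nav.
  move=> h1 h2; lra.
have B0 : 0 <= rsum (fun t => g ^+ t * exs t nav) by apply: (rsum_ge0 g0 g1 (seqs_b nav_b)).
apply: (@rsum_le _ _ g0 g1 _ 1 _ 1 (seqs_b hitf_b) ler01).
case => [|N]; first by rewrite big_geq // expr0 mulr1; apply: addr_ge0 => //; rewrite mulr_ge0 // subr_ge0 ltW.
apply: (le_trans (claim N)); apply: lerD.
  apply: ler_wpM2l; first by rewrite subr_ge0 ltW.
  exact: (rsum_ge_psum g0 g1 _ (seqs_b nav_b)).
have /andP[_ h] := exs_b N nav_b.
by rewrite mul1r -{2}(mulr1 (g ^+ N.+1)) ler_wpM2l // exprn_ge0.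
Qed.

Definition Fc p := nav p * lastval cf p.
Definition Fs p := nav p * lastval sf p.

Lemma cfE s a : cf s a = (s == s_tri)%:R.
Proof. by rewrite /cf; case: (s == s_tri). Qed.

Lemma cf_b s a : 0 <= cf s a <= 1. Proof. by rewrite cfE; exact: b01. Qed.
Lemma sf_b s a : 0 <= sf s a <= 1. Proof. exact: b01. Qed.
Lemma Fc_b p : 0 <= Fc p <= 1. Proof. by apply: mul_b; [exact: nav_b | apply: lastval_b01; exact: cf_b]. Qed.
Lemma Fs_b p : 0 <= Fs p <= 1. Proof. by apply: mul_b; [exact: nav_b | apply: lastval_b01; exact: sf_b]. Qed.

Lemma lastval_cons (f : S -> A -> R) x q : lastval f (x :: q) = f (last x q).1 (last x q).2.
Proof. by rewrite /lastval lastI rev_rcons. Qed.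

Lemma Ib_safe (y : S * A) : Ib I y -> ~~ (y.1 == s_tri) && ~~ (y.1 == s_circ).
Proof. by rewrite /Ib => /asboolP /Isafe [h1 h2]; apply/andP; split; apply/eqP. Qed.

Lemma tc_ne (y : S * A) : ~~ ((y.1 == s_tri) && (y.1 == s_circ)).
Proof. by apply/negP => /andP[/eqP -> /eqP]. Qed.

Lemma c_base : exs 0 Fc + exs 0 Fs <= exs 0 hitf.
Proof.
rewrite -(exD d00 P0 sg0 Psum sgsum d0sum _ (K := 1) (K' := 1) Fc_b Fs_b).
apply: (exs_le (K := 2) (K' := 1)) => //.
- move=> p; have /andP[h1 h2] := Fc_b p; have /andP[h3 h4] := Fs_b p.
  by rewrite addr_ge0 //=; apply: le_trans (lerD h2 h4) _; lra.
- exact: hitf_b.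
move=> [|y [|]] // _.
rewrite /Fc /Fs /nav /hitf /lastval /= cfE /avoid /= andbT negbK /sf mul1r.
have := Ib_safe (y := y); rewrite /Ib; case: (asboolP (I y.1 y.2)) => hI /=.
  move=> /(_ isT) /andP[/negbTE hA hB]; rewrite hA hB /=; lra.
by move=> _; rewrite !mul0r addr0.
Qed.

Lemma c_step N : exs N.+1 Fc + exs N.+1 Fs <= exs N.+1 hitf + exs N Fs.
Proof.
rewrite -(ex_marg d00 P0 sg0 Psum sgsum N Fs_b).
rewrite -(exD d00 P0 sg0 Psum sgsum d0sum _ (K := 1) (K' := 1) Fc_b Fs_b).
rewrite -(exD d00 P0 sg0 Psum sgsum d0sum _ (K := 1) (K' := 1) hitf_b); last first.
  by move=> p; exact: Fs_b.
apply: (ex_le d00 P0 sg0 Psum sgsum d0sum (K := 2) (K' := 2)).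
- move=> p; have /andP[h1 h2] := Fc_b p; have /andP[h3 h4] := Fs_b p.
  by rewrite addr_ge0 //=; apply: le_trans (lerD h2 h4) _; lra.
- move=> p; have /andP[h1 h2] := hitf_b p; have /andP[h3 h4] := Fs_b (take N.+1 p).
  by rewrite addr_ge0 //=; apply: le_trans (lerD h2 h4) _; lra.
case/lastP => [|q y] //; rewrite size_rcons => -[hq].
case: q hq => [|x q] // hq.
rewrite take_rcons_sz // pathprob_rcons.
set z := last x q.
have pr0 : 0 <= pathprob d0 P sg (x :: q) by apply: pathprob_ge0.
case hz : (((z.1 != s_tri) && (z.1 != s_circ)) || (y.1 == s_circ)); last first.
  move/negbT: hz; rewrite negb_or => /andP[hz1 hz2].
  by rewrite Pzero // !mul0r mulr0 !mul0r.
apply: ler_wpM2l; first by rewrite mulr_ge0 // mulr_ge0.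
rewrite /Fc /Fs /nav /hitf pre_rcons !lastval_rcons avoid_rcons lastval_cons -/z cfE /sf.
apply: boolineq => //; first exact: tc_ne.
exact: Ib_safe.
Qed.

Lemma SL2 : rsum (fun t => g ^+ t * exs t Fc) <= rsum (fun t => g ^+ t * exs t hitf).
Proof.
have claim : forall N, \sum_(0 <= t < N.+1) (g ^+ t * exs t Fc) + g ^+ N * exs N Fs <=
    \sum_(0 <= t < N.+1) (g ^+ t * exs t hitf).
  elim => [|N IH].
    by rewrite !big_nat1 expr0 !mul1r; exact: c_base.
  rewrite big_nat_recr //= [X in _ <= X]big_nat_recr //=.
  have st := c_step N.
  have a0 : 0 <= g ^+ N.+1 by rewrite exprn_ge0.
  have st' := ler_wpM2l a0 st.
  rewrite !mulrDr in st'.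
  have /andP[f0 _] := exs_b N Fs_b.
  have gg : g ^+ N.+1 * exs N Fs <= g ^+ N * exs N Fs.
    by rewrite exprS ler_wpM2r // -{2}(mul1r (g ^+ N)) ler_wpM2r // ?exprn_ge0 // ltW.
  move: IH st' gg; set x := \sum_(0 <= i < N.+1) _; set y := \sum_(0 <= i < N.+1) _.
  move=> h1 h2 h3; lra.
apply: (@rsum_le _ _ g0 g1 _ 1 _ 0 (seqs_b Fc_b) (lexx 0)).
case => [|N]; first by rewrite big_geq // mul0r addr0; exact: (rsum_ge0 g0 g1 (seqs_b hitf_b)).
rewrite mul0r addr0; apply: le_trans (rsum_ge_psum g0 g1 N.+1 (seqs_b hitf_b)).
have /andP[f0 _] := exs_b N Fs_b.
have := claim N; have : 0 <= g ^+ N * exs N Fs by rewrite mulr_ge0 // exprn_ge0.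
set x := \sum_(0 <= i < N.+1) _; set y := \sum_(0 <= i < N.+1) _; lra.
Qed.

End Pol.

Lemma rsum0 (u : nat -> R) : (forall t, u t = 0) -> rsum u = 0.
Proof.
move=> u0.
have uK : forall t, 0 <= u t <= 0 * g ^+ t by move=> t; rewrite u0 mul0r lexx.
apply/eqP; rewrite eq_le (rsum_ge0 g0 g1 uK) andbT.
apply: (@rsum_le _ _ g0 g1 _ 0 0 0 uK (lexx 0)) => N.
by rewrite big1 ?mul0r ?addr0 // => t _; rewrite u0.
Qed.

Lemma rsum_bnd (u : nat -> R) : (forall t, 0 <= u t <= 1 * g ^+ t) -> rsum u <= (1 - g)^-1.
Proof.
move=> uK; apply: (@rsum_le _ _ g0 g1 _ 1 _ 0 uK (lexx 0)) => N.
rewrite mul0r addr0; apply: le_trans (psum_geo g0 g1 N).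
by apply: ler_sum => t _; have /andP[_ h] := uK t; rewrite mul1r in h.
Qed.

Lemma lastval0 : lastval (fun (_ : S) (_ : A) => (0 : R)) = fun _ => 0.
Proof. by apply/funext => p; rewrite /lastval; case: (rev p). Qed.

Section Pol2.
Variable (sg : S -> A -> R).
Hypothesis Hsg : isPolicy sg.
Let sg0 : forall s a, 0 <= sg s a. Proof. by move=> s a; case: (Hsg s) => h _; exact: h. Qed.
Let sgsum : forall s, (\esum_(a in [set: A]) (sg s a)%:E = 1)%E. Proof. by move=> s; case: (Hsg s). Qed.

Local Notation exs := (ex d0 P sg).

Lemma ex0 t : exs t (fun _ => 0) = 0.
Proof. by rewrite /ex /Ex esum1 // => p _; rewrite mulr0. Qed.

Lemma value_pos (f : S -> A -> R) : (forall s a, 0 <= f s a <= 1) ->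
  value d0 P sg g f = rsum (fun t => g ^+ t * exs t (lastval f)).
Proof.
move=> fK.
rewrite (valueE d00 P0 sg0 Psum sgsum d0sum g0 g1 (K := 1)) //; last first.
  by move=> s a; have /andP[h1 h2] := fK s a; rewrite ger0_norm.
have -> : (fun s a => Num.max 0 (f s a)) = f.
  by apply/funext => s; apply/funext => a; have /andP[h1 h2] := fK s a; rewrite max_r.
have -> : (fun s a => Num.max 0 (- f s a)) = (fun _ _ => 0).
  apply/funext => s; apply/funext => a; have /andP[h1 h2] := fK s a.
  by rewrite max_l // oppr_le0.
rewrite lastval0 (@rsum0 (fun t => g ^+ t * exs t (fun=> 0))) ?subr0 // => t.
by rewrite ex0 mulr0.
Qed.

Lemma decomp (f : S -> A -> R) : (forall s a, 0 <= f s a <= 1) ->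
  rsum (fun t => g ^+ t * exs t (lastval f)) =
  rsum (fun t => g ^+ t * exs t (fun p => ind p * lastval f p)) +
  rsum (fun t => g ^+ t * exs t (fun p => nav p * lastval f p)).
Proof.
move=> fK.
have b1 : forall p, 0 <= ind p * lastval f p <= 1.
  by move=> p; apply: mul_b; [exact: ind_b | exact: lastval_b01].
have b2 : forall p, 0 <= nav p * lastval f p <= 1.
  by move=> p; apply: mul_b; [exact: nav_b | exact: lastval_b01].
rewrite -(rsumD g0 g1 (seqs_b Hsg b1) (seqs_b Hsg b2)); congr rsum.
apply/funext => t; rewrite -mulrDr -(exD d00 P0 sg0 Psum sgsum d0sum _ b1 b2).
rewrite [X in _ = _ * exs t X](_ : _ = lastval f) //.
by apply/funext => p; rewrite /ind /nav; case: (avoid I p) => /=; rewrite ?mul1r ?mul0r ?addr0 ?add0r.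
Qed.

Lemma hit_zero : (forall s a, I s a -> sg s a = 0) -> forall t, exs t hitf = 0.
Proof.
move=> hI t; apply/eqP; rewrite eq_le.
have /andP[-> _] := exs_b Hsg t hitf_b; rewrite andbT.
rewrite -(ex0 t); apply: (ex_le d00 P0 sg0 Psum sgsum d0sum (K := 1) (K' := 0) hitf_b).
  by move=> _; rewrite lexx.
case/lastP => [|q y] _; first by rewrite /hitf /lastval /= !mulr0.
rewrite /hitf lastval_rcons /Ib; case: (asboolP (I y.1 y.2)) => hy.
  by rewrite path_zero ?mul0r //; apply: hI.
by rewrite !mulr0.
Qed.

End Pol2.

Lemma ex_mono_avoid (s1 s2 : S -> A -> R) (F : seq (S * A) -> R) t :
  isPolicy s1 -> isPolicy s2 -> (forall p, 0 <= F p <= 1) ->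
  (forall s a, ~ I s a -> s1 s a <= s2 s a) ->
  ex d0 P s1 t (fun p => ind p * F p) <= ex d0 P s2 t (fun p => ind p * F p).
Proof.
move=> H1 H2 FK h12.
have s10 : forall s a, 0 <= s1 s a by move=> s a; case: (H1 s) => h _; exact: h.
have s20 : forall s a, 0 <= s2 s a by move=> s a; case: (H2 s) => h _; exact: h.
have b : forall p, 0 <= ind p * F p <= 1.
  by move=> p; apply: mul_b; [exact: ind_b | exact: FK].
rewrite -lee_fin -(ExE d00 P0 s10 Psum (fun s => proj2 (H1 s)) d0sum t b).
rewrite -(ExE d00 P0 s20 Psum (fun s => proj2 (H2 s)) d0sum t b).
apply: le_esum => p _; rewrite lee_fin.
rewrite /ind; case hp: (avoid I p); last by rewrite !mul0r !mulr0.
rewrite !mul1r; apply: ler_wpM2r; first by have /andP[] := FK p.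
apply: path_mono => // y hy.
apply: h12; move/allP: hp => /(_ y hy); rewrite /Ib => /negP hn hI; apply: hn; exact/asboolP.
Qed.

Lemma rsum_mono_avoid (s1 s2 : S -> A -> R) (F : seq (S * A) -> R) :
  isPolicy s1 -> isPolicy s2 -> (forall p, 0 <= F p <= 1) ->
  (forall s a, ~ I s a -> s1 s a <= s2 s a) ->
  rsum (fun t => g ^+ t * ex d0 P s1 t (fun p => ind p * F p)) <=
  rsum (fun t => g ^+ t * ex d0 P s2 t (fun p => ind p * F p)).
Proof.
move=> H1 H2 FK h12.
have b : forall p, 0 <= ind p * F p <= 1.
  by move=> p; apply: mul_b; [exact: ind_b | exact: FK].
apply: (rsum_le_pt g0 g1 _ (seqs_b H2 b)).
  by move=> t; have /andP[] := seqs_b H1 b t.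
move=> t; apply: ler_wpM2l; first by rewrite exprn_ge0.
exact: ex_mono_avoid.
Qed.

Lemma tV_eq (rho : option S -> A -> R) : isPolicy rho ->
  value (abs_d0 d0) (abs_P P I) rho g (abs_r r I Rt) =
  rsum (fun t => g ^+ t * ex d0 P (restrictS rho) t (fun p => ind p * lastval r p))
  - `|Rt| * rsum (fun t => g ^+ t * ex d0 P (restrictS rho) t hitf).
Proof.
move=> Hrho.
have rho0 : forall o a, 0 <= rho o a by move=> o a; case: (Hrho o) => h _; exact: h.
have HrS : isPolicy (restrictS rho) by move=> s; exact: (Hrho (Some s)).
have rS0 : forall s a, 0 <= restrictS rho s a by move=> s a; exact: rho0.
have rSsum : forall s, (\esum_(a in [set: A]) (restrictS rho s a)%:E = 1)%E.
  by move=> s; case: (Hrho (Some s)).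
have Rt0' : 0 <= `|Rt| by [].
have b1 : forall p, 0 <= ind p * lastval r p <= 1.
  by move=> p; apply: mul_b; [exact: ind_b | exact: lastval_b01].
have b2 : forall p, 0 <= `|Rt| * hitf p <= `|Rt|.
  move=> p; have /andP[h1 h2] := hitf_b p.
  by rewrite mulr_ge0 //= -{2}(mulr1 `|Rt|) ler_wpM2l.
rewrite /value.
set fp := fun o a => Num.max 0 (abs_r r I Rt o a).
set fn := fun o a => Num.max 0 (- abs_r r I Rt o a).
have ep : nnvalue (abs_d0 d0) (abs_P P I) rho g fp =
    (\sum_(t <oo) ((g ^+ t)%:E * Ex d0 P (restrictS rho) t (fun p => (ind p * lastval r p)%R)))%E.
  rewrite /nnvalue; apply: congr_lim; apply/funext => n; apply: eq_bigr => t _; congr (_ * _)%E.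
  change (Ex (abs_d0 d0) (abs_P P I) rho t (lastval fp) = Ex d0 P (restrictS rho) t (fun p => ind p * lastval r p)).
  rewrite (Ex_transfer I d00 P0 rho0 t); first last.
  - by move=> o a; rewrite /fp le_max lexx.
  - by move=> a; rewrite /fp /= maxxx.
  congr Ex; apply/funext; case/lastP => [|q y]; first by rewrite /lastval /= !mulr0.
  rewrite pre_rcons !lastval_rcons /ind avoid_rcons /fp /= /Ib.
  case: (asboolP (I y.1 y.2)) => hy /=.
    by rewrite max_l ?(ltW Rt0) // andbF /= mulr0 mul0r.
  have /andP[h1 h2] := Hr y.1 y.2.
  by rewrite max_r // andbT.
have en : nnvalue (abs_d0 d0) (abs_P P I) rho g fn =
    (\sum_(t <oo) ((g ^+ t)%:E * Ex d0 P (restrictS rho) t (fun p => (`|Rt| * hitf p)%R)))%E.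
  rewrite /nnvalue; apply: congr_lim; apply/funext => n; apply: eq_bigr => t _; congr (_ * _)%E.
  change (Ex (abs_d0 d0) (abs_P P I) rho t (lastval fn) = Ex d0 P (restrictS rho) t (fun p => `|Rt| * hitf p)).
  rewrite (Ex_transfer I d00 P0 rho0 t); first last.
  - by move=> o a; rewrite /fn le_max lexx.
  - by move=> a; rewrite /fn /= oppr0 maxxx.
  congr Ex; apply/funext; case/lastP => [|q y]; first by rewrite /lastval /hitf /= !mulr0.
  rewrite /hitf pre_rcons !lastval_rcons /fn /= /Ib.
  case: (asboolP (I y.1 y.2)) => hy /=.
    by rewrite max_r ?oppr_ge0 ?ltW // ltr0_norm // !mulr1 mulrC.
  have /andP[h1 h2] := Hr y.1 y.2.
  by rewrite max_l ?oppr_le0 // !mulr0.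
rewrite ep en (serE d00 P0 rS0 Psum rSsum d0sum g0 g1 b1) (serE d00 P0 rS0 Psum rSsum d0sum g0 g1 b2) /=.
congr (_ - _).
rewrite -(rsumZ g0 g1 Rt0' (seqs_b HrS hitf_b)); congr rsum; apply/funext => t.
by rewrite (exZ d00 P0 rS0 Psum rSsum d0sum t Rt0' hitf_b) mulrCA.
Qed.

Definition Ap (sg : S -> A -> R) := rsum (fun t => g ^+ t * ex d0 P sg t (fun p => ind p * lastval r p)).
Definition Hs (sg : S -> A -> R) := rsum (fun t => g ^+ t * ex d0 P sg t hitf).
Definition Bs (sg : S -> A -> R) := rsum (fun t => g ^+ t * ex d0 P sg t nav).

Lemma Ap_ge0 sg : isPolicy sg -> 0 <= Ap sg.
Proof.
move=> H; apply: (rsum_ge0 g0 g1 (seqs_b H _)) => p.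
by apply: mul_b; [exact: ind_b | apply: lastval_b01].
Qed.
Lemma Hs_ge0 sg : isPolicy sg -> 0 <= Hs sg.
Proof. by move=> H; apply: (rsum_ge0 g0 g1 (seqs_b H hitf_b)). Qed.
Lemma Bs_ge0 sg : isPolicy sg -> 0 <= Bs sg.
Proof. by move=> H; apply: (rsum_ge0 g0 g1 (seqs_b H nav_b)). Qed.
Lemma Ap_le sg : isPolicy sg -> Ap sg <= (1 - g)^-1.
Proof.
move=> H; apply: rsum_bnd; apply: seqs_b => // p.
by apply: mul_b; [exact: ind_b | apply: lastval_b01].
Qed.

Lemma Vr_eq sg : isPolicy sg -> value d0 P sg g r =
  Ap sg + rsum (fun t => g ^+ t * ex d0 P sg t (fun p => nav p * lastval r p)).
Proof. by move=> H; rewrite value_pos // decomp. Qed.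

Lemma Vr_le sg : isPolicy sg -> value d0 P sg g r <= Ap sg + Bs sg.
Proof.
move=> H; rewrite Vr_eq // lerD2l.
have b : forall p, 0 <= nav p * lastval r p <= 1.
  by move=> p; apply: mul_b; [exact: nav_b | apply: lastval_b01].
apply: (rsum_le_pt g0 g1 _ (seqs_b H nav_b)).
  by move=> t; have /andP[] := seqs_b H b t.
move=> t; apply: ler_wpM2l; first by rewrite exprn_ge0.
apply: (exs_le H b nav_b) => p _.
have /andP[h1 h2] := nav_b p; have /andP[h3 h4] := lastval_b01 p Hr.
by rewrite -{2}(mulr1 (nav p)) ler_wpM2l.
Qed.

Lemma Vr_ge sg : isPolicy sg -> Ap sg <= value d0 P sg g r.
Proof.
move=> H; rewrite Vr_eq // lerDl.
apply: (rsum_ge0 g0 g1 (seqs_b H _)) => p.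
by apply: mul_b; [exact: nav_b | apply: lastval_b01].
Qed.

Lemma PG_eq sg : isPolicy sg -> PG d0 P g I sg = (1 - g) * Bs sg.
Proof.
move=> H.
have sg0 : forall s a, 0 <= sg s a by move=> s a; case: (H s) => h _; exact: h.
have sgsum : forall s, (\esum_(a in [set: A]) (sg s a)%:E = 1)%E by move=> s; case: (H s).
rewrite /PG; congr (_ * _).
transitivity (fine (\sum_(t <oo) ((g ^+ t)%:E * Ex d0 P sg t nav))%E).
  congr fine; apply: congr_lim; apply/funext => n; apply: eq_bigr => h _; congr (_ * _)%E.
  rewrite /probhit /Ex esum_mkcond [RHS]esum_mkcond; apply: eq_esum => p _.
  rewrite /prefixes /nav /avoid.
  case: (boolP (p \in [set p | size p = h.+1 /\ exists2 x, x \in p & I x.1 x.2])).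
    move=> /set_mem [hs [x hx hI]]; rewrite ifT; last by apply/mem_set.
    have -> : ~~ all (fun x => ~~ Ib I x) p.
      by apply/negP => /allP /(_ x hx); rewrite /Ib; case: (asboolP (I x.1 x.2)).
    by rewrite mulr1.
  move=> hn; case: ifP => // /set_mem hs.
  suff -> : all (fun x => ~~ Ib I x) p by rewrite mulr0.
  apply/allP => x hx; rewrite /Ib; case: (asboolP (I x.1 x.2)) => // hI.
  by exfalso; move/negP: hn; apply; apply/mem_set; split => //; exists x.
by rewrite (serE d00 P0 sg0 Psum sgsum d0sum g0 g1 nav_b).
Qed.

Definition pihat (pi : option S -> A -> R) (o : option S) (a : A) : R :=
  match o with
  | None => pi None a
  | Some s => match pselect (exists a', ~ I s a') with
    | left h => (if `[< I s a >] then 0 else pi (Some s) a) +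
        fine (\esum_(a' in [set a' | I s a']) (pi (Some s) a')%:E)%E * ((a == proj1_sig (cid h)) : bool)%:R
    | right _ => pi (Some s) a end
  end.

Lemma ind_sum (a0 : A) : (\esum_(a in [set: A]) (((a == a0) : bool)%:R : R)%:E = 1)%E.
Proof.
rewrite (esumID [set a0]); last by move=> a _; rewrite lee_fin; exact: ler0n.
rewrite !setTI esum_set1 ?eqxx ?lee_fin ?ler01 // esum1 ?adde0 // => a /= /eqP /negbTE ->.
by [].
Qed.

Lemma pihat_pol (pi : option S -> A -> R) : isPolicy pi -> isPolicy (pihat pi).
Proof.
move=> H [s|] /=; last exact: H.
case: pselect => [h|_]; last exact: H.
have [h1 h2] := H (Some s).
have := move_mass (v := pi (Some s)) (k := fun a => ((a == proj1_sig (cid h)) : bool)%:R) (I s) h1 h2.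
by move=> /(_ (fun a => ler0n _ _) (ind_sum _)) [m1 m2]; split.
Qed.

Lemma pihat_ge (pi : option S -> A -> R) : isPolicy pi -> forall s a, ~ I s a -> restrictS pi s a <= restrictS (pihat pi) s a.
Proof.
move=> H s a hI; rewrite /restrictS /=.
case: pselect => [h|_] //.
rewrite ifF; last by apply/negbTE/negP => /asboolP.
rewrite lerDl mulr_ge0 // fine_ge0 // esum_ge0 // => a' _.
by rewrite lee_fin; case: (H (Some s)) => h1 _; exact: h1.
Qed.

Hypothesis Ipart : forall s a, I s a -> exists a', ~ I s a'.

Lemma pihat_zero (pi : option S -> A -> R) : forall s a, I s a -> restrictS (pihat pi) s a = 0.
Proof.
move=> s a hI; rewrite /restrictS /=.
case: pselect => [h|hn]; last by exfalso; apply: hn; exact: (Ipart hI).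
rewrite ifT; last exact/asboolP.
case: (cid h) => a0 /= ha0; rewrite add0r.
have -> : (a == a0) = false by apply/negbTE/negP => /eqP ha; apply: ha0; rewrite -ha.
by rewrite mulr0.
Qed.

Lemma shield_pol (sg mu : S -> A -> R) : isPolicy sg -> isPolicy mu -> isPolicy (shield I mu sg).
Proof.
move=> H Hm s; have [h1 h2] := H s; have [m1 m2] := Hm s.
by have [] := move_mass (v := sg s) (k := mu s) (I s) h1 h2 m1 m2.
Qed.

Lemma shield_ge (sg mu : S -> A -> R) : isPolicy sg -> isPolicy mu -> forall s a, ~ I s a -> sg s a <= shield I mu sg s a.
Proof.
move=> H Hm s a hI; rewrite /shield.
rewrite ifF; last by apply/negbTE/negP => /asboolP.
rewrite lerDl mulr_ge0 //; last by case: (Hm s) => m1 _; exact: m1.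
rewrite fine_ge0 // esum_ge0 // => a' _.
by rewrite lee_fin; case: (H s) => h1 _; exact: h1.
Qed.

Lemma main_result (mu : S -> A -> R) (pi : option S -> A -> R) (eps : R) (pistar : S -> A -> R) :
  isPolicy mu -> isPolicy pi -> isPolicy pistar ->
  let tV := fun p => value (abs_d0 d0) (abs_P P I) p g (abs_r r I Rt) in
  let tVstar := sup [set v | exists p, isPolicy p /\ v = tV p] in
  tVstar - tV pi <= eps ->
  let piS := restrictS pi in
  let pi' := shield I mu piS in
  value d0 P pistar g r - value d0 P piS g r
    <= (`|Rt| + 1 / (1 - g)) * PG d0 P g I pistar + eps
  /\ value d0 P piS g (fun s (_ : A) => if s == s_tri then (1 : R) else 0)
     <= value d0 P pi' g (fun s (_ : A) => if s == s_tri then (1 : R) else 0) + eps / `|Rt|.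
Proof.
move=> Hmu Hpi Hps tV tVstar Heps piS pi'.
have HpiS : isPolicy piS by move=> s; exact: (Hpi (Some s)).
have Hpi' : isPolicy pi' by apply: shield_pol.
have tVE : forall p, isPolicy p -> tV p = Ap (restrictS p) - `|Rt| * Hs (restrictS p).
  by move=> p Hp; rewrite /tV tV_eq.
have ub : has_ubound [set v | exists p, isPolicy p /\ v = tV p].
  exists (1 - g)^-1 => v [p [Hp ->]]; rewrite tVE //.
  have HpS : isPolicy (restrictS p) by move=> s; exact: (Hp (Some s)).
  have := Ap_le HpS; have := Hs_ge0 HpS; have : 0 <= `|Rt| by [].
  set x := Ap _; set y := Hs _ => h1 h2 h3.
  have : 0 <= `|Rt| * y by rewrite mulr_ge0.
  lra.
have hsup : forall p, isPolicy p -> tV p <= tVstar.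
  by move=> p Hp; apply: ub_le_sup => //; exists p.
have Rtpos : 0 < `|Rt| by rewrite normr_gt0 (lt_eqF Rt0).
have tVpi := tVE pi Hpi.
have HsS0 := Hs_ge0 HpiS.
split.
- pose pse := fun o a => match o with Some s => pistar s a | None => pi None a end.
  have Hpse : isPolicy pse by move=> [s|]; [exact: Hps | exact: Hpi].
  have h3 := hsup pse Hpse; rewrite (tVE pse Hpse) in h3.
  have {}h3 : Ap pistar - `|Rt| * Hs pistar <= tVstar := h3.
  have h1 := Vr_le Hps; have h2 := Vr_ge HpiS.
  have h6 := SL1 Hps.
  have h6' : `|Rt| * Hs pistar <= `|Rt| * ((1 - g) * Bs pistar) by rewrite ler_wpM2l.
  rewrite (PG_eq Hps).
  have g1' : 1 - g != 0 by rewrite subr_eq0 eq_sym lt_eqF.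
  have -> : (`|Rt| + 1 / (1 - g)) * ((1 - g) * Bs pistar) =
      `|Rt| * ((1 - g) * Bs pistar) + Bs pistar by field.
  have h7 : 0 <= `|Rt| * Hs piS by rewrite mulr_ge0.
  move: h1 h2 h3 h6' h7 Heps; rewrite tVpi.
  set a1 := value _ _ pistar _ _; set a2 := value _ _ piS _ _.
  set b1 := Ap pistar; set b2 := Bs pistar; set b3 := Ap piS.
  set c1 := `|Rt| * Hs pistar; set c2 := `|Rt| * ((1 - g) * Bs pistar); set c3 := `|Rt| * Hs piS.
  move=> *; lra.
- have Hph := pihat_pol Hpi.
  have HphS : isPolicy (restrictS (pihat pi)) by move=> s; exact: (Hph (Some s)).
  have h3 := hsup _ Hph; rewrite (tVE _ Hph) in h3.
  have Hz : Hs (restrictS (pihat pi)) = 0.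
    apply: rsum0 => t; rewrite (hit_zero HphS) ?mulr0 //.
    exact: pihat_zero.
  rewrite Hz mulr0 subr0 in h3.
  have hmono : Ap piS <= Ap (restrictS (pihat pi)).
    apply: rsum_mono_avoid => //; first by move=> p; apply: lastval_b01.
    exact: pihat_ge.
  have key : `|Rt| * Hs piS <= eps.
    move: h3 hmono Heps; rewrite tVpi.
    set x := Ap _; set y := Ap _; set z := `|Rt| * Hs piS; move=> *; lra.
  have key' : Hs piS <= eps / `|Rt|.
    by rewrite ler_pdivlMr // mulrC.
  suff : value d0 P piS g cf <= value d0 P pi' g cf + eps / `|Rt| by [].
  rewrite (value_pos HpiS cf_b) (value_pos Hpi' cf_b) (decomp HpiS cf_b) (decomp Hpi' cf_b).
  have hC : rsum (fun t => g ^+ t * ex d0 P piS t (fun p => ind p * lastval cf p)) <=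
            rsum (fun t => g ^+ t * ex d0 P pi' t (fun p => ind p * lastval cf p)).
    apply: rsum_mono_avoid => //; first by move=> p; apply: lastval_b01; exact: cf_b.
    exact: shield_ge.
  have hG := SL2 HpiS.
  have hG' : 0 <= rsum (fun t => g ^+ t * ex d0 P pi' t (fun p => nav p * lastval cf p)).
    by apply: (rsum_ge0 g0 g1 (seqs_b Hpi' Fc_b)).
  move: hC hG hG' key'; rewrite /Hs.
  set u1 := rsum _; set u2 := rsum _; set u3 := rsum _; set u4 := rsum _; set u5 := rsum _.
  move=> *; lra.
Qed.

End Main.

Unset Implicit Arguments.
Set Strict Implicit.

Theorem mainTheorem10 (R : realType) (S A : countType)
  (P : S -> A -> S -> R) (r : S -> A -> R) (gamma : R) (d0 : S -> R)
  (s_tri s_circ : S)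
  (Qbar : S -> A -> R) (mu : S -> A -> R) (eta : R)
  (Rt : R) (pi : option S -> A -> R) (eps : R) (pistar : S -> A -> R) :
  isKernel P ->
  (forall s a, 0 <= r s a <= 1) ->
  0 <= gamma < 1 ->
  isDist d0 ->
  s_tri <> s_circ ->
  (forall a, P s_tri a s_circ = 1) ->
  (forall a, P s_circ a s_circ = 1) ->
  (forall a, r s_tri a = 0) ->
  (forall a, r s_circ a = 0) ->
  d0 s_circ = 0 ->
  let safe := fun s => s <> s_tri /\ s <> s_circ in
  let c := fun (s : S) (_ : A) => if s == s_tri then (1 : R) else 0 in
  isPolicy mu ->
  (forall s a, safe s -> 0 <= Qbar s a <= 1) ->
  0 <= eta <= 1 ->
  let I := intervene safe Qbar mu eta in
  partialset safe I ->
  Rt < 0 ->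
  isPolicy pi ->
  isPolicy pistar ->
  let tV := fun p => value (abs_d0 d0) (abs_P P I) p gamma (abs_r r I Rt) in
  let tVstar := sup [set v | exists p, isPolicy p /\ v = tV p] in
  tVstar - tV pi <= eps ->
  let piS := restrictS pi in
  let pi' := shield I mu piS in
  value d0 P pistar gamma r - value d0 P piS gamma r
    <= (`|Rt| + 1 / (1 - gamma)) * PG d0 P gamma I pistar + eps
  /\ value d0 P piS gamma c <= value d0 P pi' gamma c + eps / `|Rt|.
Proof.
move=> HP Hr Hg Hd Htc Ptri Pcirc _ _ _ safe c Hmu _ _ I Hpart Rt0 Hpi Hps tV tVstar Heps piS pi'.
have /andP[g0 g1] := Hg.
have Isafe : forall s a, I s a -> s <> s_tri /\ s <> s_circ by move=> s a [].
have Ipart : forall s a, I s a -> exists a', ~ I s a'.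
  by move=> s a h; apply: (Hpart s a) => //; case: h.
exact: (main_result HP Hr g0 g1 Hd Htc Ptri Pcirc Isafe Rt0 Ipart Hmu Hpi Hps Heps).
Qed.
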